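(* Let $\mathcal{C}_1,\dots,\mathcal{C}_D\subsetneq\mathbb{F}_q^n$ be linear codes and $\rho:=\rho(\mathcal{C}_1,\dots,\mathcal{C}_D)$. Then every $\rho$-closed subset $M\subseteq[n]^D$ is inner-generated for the code $\mathcal{C}_1\boxplus\cdots\boxplus\mathcal{C}_D$.
   Context: $\mathbb{F}_q$ is a finite field of characteristic 2; $|v|$ is Hamming weight, $\|v\|=|v|/|S|$ for $v\in\mathbb{F}_q^S$. $\mathcal{L}_i$ is the set of lines in $[n]^D$ parallel to the $i$-th axis (sets $A_1\times\cdots\times A_D$ with $A_i=[n]$, $|A_j|=1$ for $j\ne i$), $\mathcal{L}=\bigcup_i\mathcal{L}_i$; a line in $\mathcal{L}_i$ is identified with $[n]$ via the $i$-th coordinate. $\mathcal{C}^{(i)}=\{c\in\mathbb{F}_q^{[n]^D}:c|_\ell\in\mathcal{C}_i\ \forall\ell\in\mathcal{L}_i\}$, $\mathcal{C}_1\boxplus\cdots\boxplus\mathcal{C}_D=\sum_i\mathcal{C}^{(i)}$; $|x|_i$ is the number of $\ell\in\mathcal{L}_i$ with $x|_\ell\ne0$, $\|x\|_i=|x|_i/n^{D-1}$. The collection is $\rho$-product-expanding if every $c\in\mathcal{C}_1\boxplus\cdots\boxplus\mathcal{C}_D$ can be written $c=\sum_ia_i$, $a_i\in\mathcal{C}^{(i)}$, with $\rho\sum_i\|a_i\|_i\le\|c\|$; $\rho(\mathcal{C}_1,\dots,\mathcal{C}_D)$ is the maximal such $\rho$. For $\ell\in\mathcal{L}_i$, $\mathcal{C}_\ell=\{c:\operatorname{supp}c\subseteq\ell,\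 c|_\ell\in\mathcal{C}_i\}$; for $M\subseteq[n]^D$, $L(M)=\{\ell\in\mathcal{L}:\ell\subseteq M\}$. $M$ is inner-generated for $\mathcal{C}_1\boxplus\cdots\boxplus\mathcal{C}_D$ if every codeword $c$ of it with $\operatorname{supp}c\subseteq M$ lies in $\sum_{\ell\in L(M)}\mathcal{C}_\ell$. For $\varepsilon>0$, $M$ is $\varepsilon$-closed if for every line $\ell\in\mathcal{L}$ either $\ell\subseteq M$ or $|\ell\cap M|<\varepsilon n$. *)

(* Defs.v *)
From HB Require Import structures.
From mathcomp Require Import all_boot all_order all_algebra.
Set Implicit Arguments. Unset Strict Implicit. Unset Printing Implicit Defensive.
Import Order.TTheory GRing.Theory Num.Theory.
Local Open Scope ring_scope.

Section Defs.
Variables (F : finFieldType) (D n : nat).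

Definition grid := {ffun 'I_D -> 'I_n}.
Definition word := {ffun grid -> F}.

Definition setc (p : grid) (i : 'I_D) (k : 'I_n) : grid :=
  [ffun j => if j == i then k else p j].

Definition line (i : 'I_D) (p : grid) : {set grid} :=
  [set y : grid | [forall j, (j != i) ==> (y j == p j)]].

(* Restriction of a word to the line through p parallel to axis i,
   identified with [n] via the i-th coordinate. *)
Definition restr (x : word) (i : 'I_D) (p : grid) : 'rV[F]_n :=
  \row_k x (setc p i k).

Definition in_Ci (C : 'I_D -> {vspace 'rV[F]_n}) (i : 'I_D) (x : word) : Prop :=
  forall p : grid, restr x i p \in C i.

(* membership in C_1 ⊞ ... ⊞ C_D = sum_i C^(i) *)
Definition in_tensor_sum (C : 'I_D -> {vspace 'rV[F]_n}) (c : word) : Prop :=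
  exists a : 'I_D -> word, (forall i, in_Ci C i (a i)) /\ c = \sum_i a i.

Definition hw (x : word) : nat := #|[set y : grid | x y != 0]|.

Definition line_wt (x : word) (i : 'I_D) : nat :=
  #|[set line i p | p in [set p : grid | [exists y in line i p, x y != 0]]]|.

Variable R : realFieldType.

Definition nhw (x : word) : R := (hw x)%:R / (n ^ D)%:R.
Definition nline_wt (x : word) (i : 'I_D) : R := (line_wt x i)%:R / (n ^ D.-1)%:R.

Definition product_expanding (C : 'I_D -> {vspace 'rV[F]_n}) (rho : R) : Prop :=
  forall c : word, in_tensor_sum C c ->
    exists a : 'I_D -> word,
      [/\ forall i, in_Ci C i (a i), c = \sum_i a i &
          rho * (\sum_i nline_wt (a i) i) <= nhw c].

Definition is_rho (C : 'I_D -> {vspace 'rV[F]_n}) (rho : R) : Prop :=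
  product_expanding C rho /\ forall r : R, product_expanding C r -> r <= rho.

Definition in_Cline (C : 'I_D -> {vspace 'rV[F]_n}) (i : 'I_D) (p : grid) (x : word) : Prop :=
  (forall y, y \notin line i p -> x y = 0) /\ restr x i p \in C i.

Definition closed_set (eps : R) (M : {set grid}) : Prop :=
  forall (i : 'I_D) (p : grid),
    line i p \subset M \/ (#|line i p :&: M|%:R < eps * n%:R).

Definition inner_generated (C : 'I_D -> {vspace 'rV[F]_n}) (M : {set grid}) : Prop :=
  forall c : word, in_tensor_sum C c -> (forall y, c y != 0 -> y \in M) ->
    exists f : 'I_D -> grid -> word,
      (forall i p, in_Cline C i p (f i p)) /\
      (forall i p, ~~ (line i p \subset M) -> f i p = 0) /\
      c = \sum_i \sum_p f i p.

End Defs.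

(* Main.v *)
Require Import Defs.
From HB Require Import structures.
From mathcomp Require Import all_boot all_order all_algebra.
From mathcomp Require Import ring.
Import Order.TTheory GRing.Theory Num.Theory.
Local Open Scope ring_scope.
Set Implicit Arguments. Unset Strict Implicit. Unset Printing Implicit Defensive.

Section Aux.
Variables (F : finFieldType) (D n : nat) (C : 'I_D -> {vspace 'rV[F]_n}).
Variables (R : realFieldType) (rho : R) (M : {set grid D n}).

Local Notation wordT := (word F D n).
Local Notation gridT := (grid D n).

Definition inI (c : wordT) := exists f : 'I_D -> gridT -> wordT,
      (forall i p, in_Cline C i p (f i p)) /\
      (forall i p, ~~ (line i p \subset M) -> f i p = 0) /\
      c = \sum_i \sum_p f i p.

Lemma restr0 i p : restr (0 : wordT) i p = 0.
Proof. by apply/rowP => k; rewrite !mxE ffunE. Qed.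

Lemma restrD (x y : wordT) i p : restr (x + y) i p = restr x i p + restr y i p.
Proof. by apply/rowP => k; rewrite !mxE ffunE. Qed.

Lemma inI0 : inI 0.
Proof.
exists (fun _ _ => 0); split; [|split].
- by move=> i p; split=> [y _|]; rewrite ?ffunE // restr0 mem0v.
- by [].
- by rewrite big1 // => i _; rewrite big1.
Qed.

Lemma inID x y : inI x -> inI y -> inI (x + y).
Proof.
move=> [f [hf [hf0 ->]]] [g [hg [hg0 ->]]].
exists (fun i p => f i p + g i p); split; [|split].
- move=> i p; have [h1 h2] := hf i p; have [h3 h4] := hg i p; split.
    by move=> z hz; rewrite ffunE h1 // h3 // addr0.
  by rewrite restrD memvD.
- by move=> i p h; rewrite hf0 // hg0 // addr0.
- by rewrite -big_split; apply: eq_bigr => i _; rewrite -big_split.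
Qed.

Lemma inI_sum (I : finType) (G : I -> wordT) : (forall i, inI (G i)) -> inI (\sum_i G i).
Proof. by move=> H; apply: (big_ind inI) => //; [exact: inI0 | exact: inID]. Qed.

Lemma line_refl i (p : gridT) : p \in line i p.
Proof. by rewrite inE; apply/forallP => j; apply/implyP. Qed.

Lemma line_eq i (p y : gridT) : y \in line i p -> line i y = line i p.
Proof.
rewrite inE => /forallP H; apply/setP => z; rewrite !inE.
apply/forallP/forallP => H' j; apply/implyP => hj.
- by rewrite (eqP (implyP (H' j) hj)) (eqP (implyP (H j) hj)).
- by rewrite (eqP (implyP (H' j) hj)) (eqP (implyP (H j) hj)).
Qed.

Lemma line_sym i (p y : gridT) : y \in line i p -> p \in line i y.
Proof. by move=> h; rewrite (line_eq h) line_refl. Qed.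

Lemma setc_line i (p : gridT) k : setc p i k \in line i p.
Proof. by rewrite inE; apply/forallP=> j; apply/implyP => hj; rewrite ffunE (negbTE hj). Qed.

Lemma line_setc i (p y : gridT) : y \in line i p -> y = setc p i (y i).
Proof.
rewrite inE => /forallP H; apply/ffunP => j; rewrite ffunE.
by case: eqP => [->|/eqP hj] //; rewrite (eqP (implyP (H j) hj)).
Qed.

Definition keepM (x : wordT) i : wordT := [ffun y => if line i y \subset M then x y else 0].
Definition dropM (x : wordT) i : wordT := [ffun y => if line i y \subset M then 0 else x y].

Lemma keep_drop x i : x = keepM x i + dropM x i.
Proof. by apply/ffunP => y; rewrite !ffunE; case: ifP; rewrite ?addr0 ?add0r. Qed.

Lemma restr_drop x i p : restr (dropM x i) i p = if line i p \subset M then 0 else restr x i p.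
Proof.
by case: ifP => h; apply/rowP => k; rewrite !mxE !ffunE (line_eq (setc_line _ _ _)) h.
Qed.

Lemma in_Ci_drop x i : in_Ci C i x -> in_Ci C i (dropM x i).
Proof. by move=> H p; rewrite restr_drop; case: ifP => _; [exact: mem0v | exact: H]. Qed.

Lemma keep_inI x i : in_Ci C i x -> inI (keepM x i).
Proof.
move=> H.
pose f j (p : gridT) : wordT := if (j == i) && (nat_of_ord (p j) == 0%N) && (line j p \subset M)
  then [ffun y : gridT => if [forall k, (k != j) ==> (y k == p k)] then x y else 0] else 0.
exists f; split; [|split].
- move=> j p; rewrite /f; case: ifP => [/andP [/andP [/eqP hj _] _]|_].
    split; first by move=> y; rewrite inE => hy; rewrite ffunE (negbTE hy).
    subst j; have -> : restr [ffun y : gridT => if [forall k, (k != i) ==> (y k == p k)] then x y else 0] i p = restr x i p.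
      by apply/rowP => k; rewrite !mxE ffunE -(in_set (fun y : gridT => [forall k, (k != i) ==> (y k == p k)])) setc_line.
    exact: H.
  by split; [move=> y _; rewrite ffunE | rewrite restr0 mem0v].
- by move=> j p h; rewrite /f (negbTE h) andbF.
- rewrite (bigD1 i) //= [X in _ + X]big1 ?addr0; last first.
    by move=> j hj; apply: big1 => p _; rewrite /f (negbTE hj).
  apply/ffunP => y; rewrite sum_ffunE ffunE.
  have k0lt : (0 < n)%N by case: (y i) => m hm; apply: leq_ltn_trans hm.
  pose p0 := setc y i (Ordinal k0lt).
  have hl0 : line i p0 = line i y by rewrite (line_eq (setc_line _ _ _)).
  rewrite (bigD1 p0) //= big1 ?addr0.
    have hp0i : (nat_of_ord (p0 i) == 0)%N by rewrite /p0 ffunE eqxx.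
    rewrite /f eqxx hp0i hl0 !andTb; case: ifP => _; rewrite ffunE //.
    have -> : [forall k, (k != i) ==> (y k == p0 k)] by have := line_sym (setc_line i y (Ordinal k0lt)); rewrite inE.
    by [].
  move=> p hp; rewrite /f eqxx /=.
  case: ifP => [/andP [hp0 _]|_]; last by rewrite ffunE.
  rewrite ffunE -(in_set (fun z : gridT => [forall k, (k != i) ==> (z k == p k)])).
  case: ifP => // hy.
  exfalso; move/negP: hp; apply; apply/eqP.
  rewrite (line_setc (line_sym hy)); congr setc; apply: val_inj => /=; exact/eqP.
Qed.

Lemma card_bigcup (T I : finType) (P : pred I) (B : I -> {set T}) :
  (#|\bigcup_(i | P i) B i| <= \sum_(i | P i) #|B i|)%N.
Proof.
apply: (big_rec2 (fun (X : {set T}) (k : nat) => is_true (#|X| <= k)%N)) => [|i X k _ hk]; first by rewrite cards0.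
by apply: leq_trans (leq_card_setU _ _) _; rewrite leq_add2l.
Qed.

Lemma sum_lt (I : finType) (P : pred I) (G1 G2 : I -> R) i0 :
  P i0 -> G1 i0 < G2 i0 -> (forall i, P i -> G1 i <= G2 i) ->
  \sum_(i | P i) G1 i < \sum_(i | P i) G2 i.
Proof.
move=> h0 hlt hle; rewrite (bigD1 i0) //= [X in _ < X](bigD1 i0) //=.
by apply: ltr_leD => //; apply: ler_sum => i /andP [hi _]; apply: hle.
Qed.


Hypothesis hPE : product_expanding C rho.
Hypothesis hM : closed_set rho M.

Lemma drop_nz (a : 'I_D -> wordT) y :
  (\sum_i dropM (a i) i) y != 0 -> exists i, dropM (a i) i y != 0.
Proof.
rewrite sum_ffunE => h; apply/existsP; apply: contraNT h => /existsPn H.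
by rewrite big1 // => i _; apply/eqP; rewrite -[_ == 0]negbK H.
Qed.

Lemma drop_notM (x : wordT) i y : dropM x i y != 0 -> ~~ (line i y \subset M).
Proof. by rewrite ffunE; case: ifP => //; rewrite eqxx. Qed.

Lemma drop_a (x : wordT) i y : dropM x i y != 0 -> x y != 0.
Proof. by rewrite ffunE; case: ifP => //; rewrite eqxx. Qed.

Lemma step (c : wordT) : in_tensor_sum C c -> (forall y, c y != 0 -> y \in M) ->
  exists g d, [/\ inI g, c = g + d, in_tensor_sum C d, (forall y, d y != 0 -> y \in M)
             & d = 0 \/ (hw d < hw c)%N].
Proof.
move=> hc hs.
have [a [hai hca hineq]] := hPE hc.
pose g := \sum_i keepM (a i) i.
pose d := \sum_i dropM (a i) i.
have hcgd : c = g + d.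
  by rewrite hca /g /d -big_split; apply: eq_bigr => i _; exact: keep_drop.
have hds : forall y, d y != 0 -> y \in M.
  move=> y hy; apply: contraNT hy => hyM.
  have hcy : c y = 0 by apply/eqP; apply: contraNT hyM; exact: hs.
  have hgy : g y = 0.
    rewrite /g sum_ffunE big1 // => i _; rewrite ffunE; case: ifP => // hl.
    by exfalso; move/negP: hyM; apply; apply: (subsetP hl); apply: line_refl.
  by move: hcy; rewrite hcgd ffunE hgy add0r => ->.
exists g, d; split => //.
- by apply: inI_sum => i; apply: keep_inI.
- by exists (fun i => dropM (a i) i); split => // i; apply: in_Ci_drop.
have [->|hd0] := eqVneq d 0; [by left | right].
have [y0 hy0] : exists y0, d y0 != 0.
  apply/existsP; apply: contraNT hd0 => /existsPn H; apply/eqP/ffunP => y.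
  by rewrite ffunE; apply/eqP; rewrite -[_ == 0]negbK H.
have [i0 hi0] := drop_nz hy0.
pose Lset i := [set line i p | p in [set p : gridT | [exists y in line i p, dropM (a i) i y != 0]]].
pose supp := [set y | d y != 0].
have hL : forall i l, l \in Lset i -> exists p, l = line i p /\ ~~ (line i p \subset M).
  move=> i l /imsetP [p]; rewrite inE => /existsP [y /andP [hy hne]] ->.
  by exists p; split => //; rewrite -(line_eq hy); apply: drop_notM hne.
have hlt_l : forall i l, l \in Lset i -> (#|l :&: supp|%:R : R) < rho * n%:R.
  move=> i l /hL [p [-> hp]].
  case: (hM i p) => [h|h]; first by rewrite h in hp.
  apply: le_lt_trans h; rewrite ler_nat; apply: subset_leq_card; apply: setIS.
  by apply/subsetP => y; rewrite inE; apply: hds.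
have hl0 : line i0 y0 \in Lset i0.
  apply/imsetP; exists y0 => //; rewrite inE; apply/existsP; exists y0; rewrite hi0 andbT.
  exact: line_refl.
have hrn : 0 < rho * n%:R by apply: le_lt_trans (hlt_l _ _ hl0).
have hcover : (hw d <= \sum_i \sum_(l in Lset i) #|l :&: supp|)%N.
  apply: (@leq_trans #|\bigcup_i \bigcup_(l in Lset i) (l :&: supp)|).
    apply: subset_leq_card; apply/subsetP => y; rewrite inE => hy.
    have [i hi] := drop_nz hy.
    apply/bigcupP; exists i => //; apply/bigcupP; exists (line i y).
      apply/imsetP; exists y => //; rewrite inE; apply/existsP; exists y; rewrite hi andbT.
      exact: line_refl.
    by rewrite inE line_refl inE hy.
  apply: leq_trans (card_bigcup _ _) _; apply: leq_sum => i _; exact: card_bigcup.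
have hLw : forall i, (#|Lset i| <= line_wt (a i) i)%N.
  move=> i; apply: subset_leq_card; apply: imsetS; apply/subsetP => p; rewrite !inE.
  move=> /existsP [y /andP [hy hne]]; apply/existsP; exists y; rewrite hy /=.
  exact: drop_a hne.
have hD : (0 < D)%N by by case: (i0) => m hm; apply: leq_ltn_trans hm.
have hn : (0 < n)%N by case: (y0 i0) => m hm; apply: leq_ltn_trans hm.
pose S := (\sum_i line_wt (a i) i)%N.
have key : (hw d)%:R < rho * n%:R * (S%:R : R).
  apply: (le_lt_trans (y := (\sum_i \sum_(l in Lset i) #|l :&: supp|)%N%:R)).
    by rewrite ler_nat.
  rewrite natr_sum.
  apply: (lt_le_trans (y := \sum_i \sum_(l in Lset i) (rho * n%:R))).
    apply: (sum_lt (i0 := i0)) => // [|i _]; rewrite natr_sum.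
      apply: (sum_lt (i0 := line i0 y0)); [exact: hl0 | exact: hlt_l hl0 |].
      by move=> l hl; apply/ltW; apply: (hlt_l i0).
    by apply: ler_sum => l hl; apply/ltW; apply: (hlt_l i).
  rewrite /S natr_sum mulr_sumr; apply: ler_sum => i _.
  rewrite sumr_const -(mulr_natr (rho * n%:R) #|Lset i|); apply: ler_wpM2l; first exact: ltW.
  by rewrite ler_nat.
have hexp : (hw c)%:R / ((n ^ D)%:R : R) = (hw c)%:R / (n%:R * (n ^ D.-1)%:R).
  by rewrite -natrM -expnS prednK.
have hm : 0 < ((n ^ D.-1)%:R : R) by rewrite ltr0n expn_gt0 hn.
have hn' : 0 < (n%:R : R) by rewrite ltr0n.
have hS : rho * (\sum_i nline_wt R (a i) i) = rho * S%:R / (n ^ D.-1)%:R.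
  by rewrite /nline_wt /S -mulr_suml natr_sum mulrA.
move: hineq; rewrite hS /nhw hexp => hineq.
have hfin : rho * n%:R * S%:R <= (hw c)%:R.
  have e1 : rho * S%:R / (n ^ D.-1)%:R * (n%:R * (n ^ D.-1)%:R) = rho * n%:R * (S%:R : R).
    by field; rewrite gt_eqF.
  have e2 : (hw c)%:R / (n%:R * (n ^ D.-1)%:R) * (n%:R * (n ^ D.-1)%:R) = ((hw c)%:R : R).
    by field; rewrite ?gt_eqF //.
  rewrite -e1 -e2; apply: ler_wpM2r => //; apply/ltW; exact: mulr_gt0.
by rewrite -(ltr_nat R); apply: lt_le_trans key hfin.
Qed.

Lemma main (c : wordT) : in_tensor_sum C c -> (forall y, c y != 0 -> y \in M) -> inI c.
Proof.
suff H : forall k (c : wordT), (hw c < k)%N -> in_tensor_sum C c ->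
  (forall y, c y != 0 -> y \in M) -> inI c by apply: (H (hw c).+1).
elim=> [//|k IH] {}c hk hc hs.
have [g [d [hg hcd hd hds hor]]] := step hc hs.
rewrite hcd.
case: hor => [->|hlt]; first by rewrite addr0.
apply: inID => //; apply: IH => //; idtac.
rewrite ltnS in hk; exact: (leq_trans hlt hk).
Qed.

End Aux.

Unset Implicit Arguments. Set Strict Implicit.

Theorem lemma7 (F : finFieldType) (hF : 2%N \in [pchar F]) (D n : nat)
  (C : 'I_D -> {vspace 'rV[F]_n}) (hC : forall i, C i != fullv)
  (R : realFieldType) (rho : R) (hrho : is_rho C rho)
  (M : {set grid D n}) (hM : closed_set rho M) :
  inner_generated C M.
Proof.
move=> c hc hs; exact: (main hrho.1 hM hc hs).
Qed.
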